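(* Let $(V,S)$ be a pair of adapted processes $V=(V_t)_{t\in\mathbb{T}}$, $S=(S_t)_{t\in\mathbb{T}\cup\{T\}}$ satisfying properties (i)–(iii) below. Then for every $t\in\mathbb{T}$, on the set $\{t<T_e\}\cap\{V_t>G_t\}$ we have $S_t=E[S_{t+1}\mid\mathcal{F}_t]$ and $S_tV_t=E[S_{t+1}V_{t+1}\mid\mathcal{F}_t]$. (i) $0<S_t\le1$ on $D_t$ and $S_t=0$ on $D_t^c$ for all $t\in\mathbb{T}$, and $V_t=G_t$ on $\{t\ge T_e\}$. (ii) Given $S$, $V$ is the smallest adapted process which dominates $G$ and renders the stopped process $(S_{t\wedge T_e}V_{t\wedge T_e})_{t\in\mathbb{T}}$ a supermartingale. (iii) Given $V$, $S$ is the smallest nonnegative supermartingale on $\mathbb{T}\cup\{T\}$ satisfying $S_t=1$ on $D_t\cap\{V_t=G_t\}$ for all $t\in\mathbb{T}$, and $S_\infty=1_{\{\sigma=\infty\}}$ if $T=\infty$.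
   Context: Let $T\in\mathbb{N}\cup\{\infty\}$, $\mathbb{T}=\{0,\dots,T\}$ if $T<\infty$ and $\mathbb{T}=\{0,1,2,\dots\}$ if $T=\infty$ (supermartingale properties are understood on $\mathbb{T}$ unless stated otherwise). Let $(\Omega,\mathcal{F},P)$ be a probability space with filtration $(\mathcal{F}_t)_{t\le T}$, $\mathcal{F}_0$ trivial. Let $\sigma$ be a stopping time with values in $\{0,1,\dots\}\cup\{\infty\}$, $P(\sigma>0)=1$; $D_t=\{t<\sigma\}$, $D_\infty=\{\sigma=\infty\}$. Let $G=(G_t)_{t\in\mathbb{T}\cup\{T\}}$ be adapted, with $G_t=\Delta$ on $D_t^c$ ($\Delta$ an auxiliary symbol with $0\cdot\Delta=0$), $E[\sup_{t\le T}|G_t|1_{D_t}]<\infty$, and if $T=\infty$, $G_\infty=\limsup_{t\to\infty}G_t$. Effective horizon: $T_e=T\wedge\inf\{0\le t<T:P(D_{t+1}\mid\mathcal{F}_t)=0\}$, with $\inf\emptyset=\infty$. *)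

(* Defs.v *)
From HB Require Import structures.
From mathcomp Require Import all_boot all_order all_algebra.
From mathcomp Require Import all_classical all_reals all_analysis.

Set Implicit Arguments.
Unset Strict Implicit.
Unset Printing Implicit Defensive.
Import Order.TTheory GRing.Theory Num.Theory.
Local Open Scope classical_set_scope.
Local Open Scope ring_scope.

(* Extended naturals N u {oo}: [Some n] = n, [None] = oo. *)
Definition enat := option nat.

(* t <= T  (t in the index set T = {0..T} or N) *)
Definition inT (T : enat) (t : nat) : Prop :=
  match T with Some n => (t <= n)%N | None => True end.
Definition ltT (t : nat) (T : enat) : Prop :=
  match T with Some n => (t < n)%N | None => True end.
Definition leT (e : enat) (t : nat) : Prop :=
  match e with Some n => (n <= t)%N | None => False end.
Definition tmin (t : nat) (e : enat) : nat :=
  match e with Some n => minn t n | None => t end.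

Section Defs.
Context {d : measure_display} {Omega : measurableType d} {R : realType}.
Variable P : probability Omega R.

Definition Fmeas (F : set (set Omega)) (X : Omega -> R) : Prop :=
  forall B : set R, measurable B -> F (X @^-1` B).

(* X is F-measurable on the set D (used for processes taking the cemetery
   value Delta outside D) *)
Definition Fmeas_on (F : set (set Omega)) (D : set Omega) (X : Omega -> R) : Prop :=
  forall B : set R, measurable B -> F (D `&` X @^-1` B).

Definition cond_exp_version (F : set (set Omega)) (X Y : Omega -> R) : Prop :=
  Fmeas F Y /\ P.-integrable setT (EFin \o Y) /\
  forall A, F A -> (\int[P]_(w in A) (Y w)%:E = \int[P]_(w in A) (X w)%:E)%E.

Definition filtration (T : enat) (F : nat -> set (set Omega)) : Prop :=
  (forall t, inT T t -> sigma_algebra setT (F t) /\ F t `<=` measurable) /\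
  (forall s t, (s <= t)%N -> inT T t -> F s `<=` F t) /\
  (forall A, F 0%N A -> A = set0 \/ A = setT).

Definition Finf (F : nat -> set (set Omega)) : set (set Omega) :=
  smallest (sigma_algebra setT) (\bigcup_(t in [set: nat]) F t).

Definition stopping_time (T : enat) (F : nat -> set (set Omega))
    (sigma : Omega -> enat) : Prop :=
  forall t, inT T t -> F t [set w | leT (sigma w) t].

Definition Dset (sigma : Omega -> enat) (t : nat) : set Omega :=
  [set w | ltT t (sigma w)].

Definition supermart (T : enat) (F : nat -> set (set Omega))
    (X : nat -> Omega -> R) : Prop :=
  (forall t, inT T t -> Fmeas (F t) (X t) /\ P.-integrable setT (EFin \o X t)) /\
  (forall s t, (s <= t)%N -> inT T t ->
     forall Y, cond_exp_version (F s) (X t) Y ->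
       {ae P, forall w, Y w <= X s w}).

(* supermartingale on the time set T u {T}: a process (X, Xinf), where Xinf
   is the value at time oo, only relevant when T = oo (T = None). *)
Definition supermart_ext (T : enat) (F : nat -> set (set Omega))
    (X : nat -> Omega -> R) (Xinf : Omega -> R) : Prop :=
  supermart T F X /\
  (T = None ->
     Fmeas (Finf F) Xinf /\ P.-integrable setT (EFin \o Xinf) /\
     forall s, forall Y, cond_exp_version (F s) Xinf Y ->
       {ae P, forall w, Y w <= X s w}).

(* effective horizon T_e = T /\ inf {0 <= t < T : p t = 0}, where p t is a
   (fixed) version of P(D_{t+1} | F_t) *)
Definition eff_horizon (T : enat) (p : nat -> Omega -> R) (w : Omega) : enat :=
  let Q := fun s => `[< ltT s T /\ p s w = 0 >] in
  match pselect (exists s, Q s) with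
  | left h => Some (ex_minn h)
  | right _ => T
  end.

Definition stopped (X : nat -> Omega -> R) (tau : Omega -> enat) :
    nat -> Omega -> R :=
  fun t w => X (tmin t (tau w)) w.

End Defs.

(* Main.v *)
Require Import Defs.
From HB Require Import structures.
From mathcomp Require Import all_boot all_order all_algebra.
From mathcomp Require Import all_classical all_reals all_analysis.
From mathcomp Require Import measurable_realfun.
From mathcomp Require Import lra.
Import Order.TTheory GRing.Theory Num.Theory.
Local Open Scope classical_set_scope.
Local Open Scope ring_scope.

Section CE.
Context {d : measure_display} {Omega : measurableType d} {R : realType}.
Context (P : probability Omega R) (F : set (set Omega)).
Context (FM : F `<=` measurable).

Definition Tg := g_sigma_algebraType F.
Definition idF : Omega -> Tg := id.

Lemma measurable_idF : measurable_fun setT idF.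
Proof.
move=> _ A mA; rewrite setTI.
have : (<<s F>> `<=` measurable).
  by apply: smallest_sub => //; exact: sigma_algebra_measurable.
by apply.
Qed.

Definition muF := pushforward P idF.

Let muF0 : muF set0 = 0%E. Proof. by rewrite /muF /pushforward preimage_set0 measure0. Qed.
Let muF_ge0 A : (0 <= muF A)%E. Proof. exact: (measure_ge0 P). Qed.
Let muF_sigma_additive : semi_sigma_additive muF.
Proof.
have mf := measurable_idF.
move=> G mG tG mUG; rewrite /muF /pushforward preimage_bigcup.
apply: measure_semi_sigma_additive.
- by move=> n; rewrite -[X in measurable X]setTI; exact: mf.
- apply/trivIsetP => /= i j _ _ ij; rewrite -preimage_setI.
  by move/trivIsetP : tG => /(_ _ _ _ _ ij) ->//; rewrite preimage_set0.
- by rewrite -preimage_bigcup -[X in measurable X]setTI; exact: mf.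
Qed.
HB.instance Definition _ := isMeasure.Build _ _ _ muF muF0 muF_ge0 muF_sigma_additive.
Let muF_setT : muF [set: Tg] = 1%:E.
Proof. by rewrite /muF /pushforward preimage_setT probability_setT. Qed.
HB.instance Definition _ := Measure_isProbability.Build _ _ _ muF muF_setT.


Section CEX.
Context (X : Omega -> R) (intX : P.-integrable setT (EFin \o X)).

Definition nu0 := induced_charge intX.
Definition nuF := pushforward nu0 idF.

Let nuF0 : nuF set0 = 0%E.
Proof. rewrite /nuF /pushforward preimage_set0. exact: (charge0 nu0). Qed.

Let nuF_finite A : measurable A -> nuF A \is a fin_num.
Proof.
move=> mA; apply: (fin_num_measure nu0).
by rewrite -[X in measurable X]setTI; exact: measurable_idF.
Qed.

Let nuF_sigma_additive : semi_sigma_additive nuF.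
Proof.
have mf := measurable_idF.
move=> G mG tG mUG; rewrite /nuF /pushforward preimage_bigcup.
apply: charge_semi_sigma_additive.
- by move=> n; rewrite -[X in measurable X]setTI; exact: mf.
- apply/trivIsetP => /= i j _ _ ij; rewrite -preimage_setI.
  by move/trivIsetP : tG => /(_ _ _ _ _ ij) ->//; rewrite preimage_set0.
- by rewrite -preimage_bigcup -[X in measurable X]setTI; exact: mf.
Qed.

HB.instance Definition _ := isCharge.Build _ _ _ nuF nuF0 nuF_finite nuF_sigma_additive.

Lemma nuF_dom : nuF `<< muF.
Proof.
apply/null_content_dominatesP => A mA.
rewrite /muF /nuF /pushforward => PA0.
have mA' : measurable (idF @^-1` A).
  by rewrite -[X in measurable X]setTI; exact: measurable_idF.
rewrite /nu0 /induced_charge.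
have mX : measurable_fun [set: Omega] (EFin \o X) by case/integrableP: intX.
apply/eqP; rewrite -abse_eq0 eq_le abse_ge0 andbT.
rewrite (le_trans (le_abse_integral _ _ (measurable_funTS mX)))//=.
rewrite le_eqVlt; apply/orP; left; apply/eqP.
apply: null_set_integral => //=.
apply: measurable_funTS; apply/measurable_EFinP; apply: measurableT_comp => //.
by move/measurable_EFinP: mX.
Qed.


Definition CEf : Tg -> \bar R := Radon_Nikodym nuF muF.

Lemma CEf_int : muF.-integrable setT CEf.
Proof. exact: Radon_Nikodym_integrable nuF_dom. Qed.

Lemma CEf_meas : measurable_fun setT CEf.
Proof. exact: measurable_int CEf_int. Qed.

Lemma CEf_fin w : CEf w \is a fin_num.
Proof. exact: Radon_Nikodym_fin_num nuF_dom. Qed.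

Lemma CEf_integral A : measurable A -> nuF A = (\int[muF]_(x in A) CEf x)%E.
Proof. exact: Radon_Nikodym_integral nuF_dom. Qed.

Lemma CEf_Omega_meas : measurable_fun [set: Omega] (CEf \o idF).
Proof. exact: measurableT_comp CEf_meas measurable_idF. Qed.

Lemma CEf_Omega_int : P.-integrable [set: Omega] (CEf \o idF).
Proof.
apply/integrableP; split; first exact: CEf_Omega_meas.
have H := ge0_integral_pushforward measurable_idF P (D := setT) (f := fun y => `|CEf y|%E)
  measurableT (measurableT_comp (@abse_measurable _ setT) CEf_meas) (fun _ _ => abse_ge0 _).
case/integrableP: CEf_int => _; apply: le_lt_trans.
rewrite le_eqVlt; apply/orP; left; apply/eqP; symmetry; exact: H.
Qed.

End CEX.

Lemma cond_exp_exists (sF : sigma_algebra setT F) (X : Omega -> R) :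
  P.-integrable setT (EFin \o X) -> exists Y, cond_exp_version P F X Y.
Proof.
move=> intX; exists (fun w => fine (CEf X intX w)).
have mE : forall A : set Tg, measurable A -> F A.
  by move=> A; rewrite measurable_g_measurableTypeE.
have mE' : forall A, F A -> measurable (A : set Tg).
  by move=> A; rewrite measurable_g_measurableTypeE.
have eqf : EFin \o (fun w => fine (CEf X intX w)) = CEf X intX \o idF.
  by apply/funext => w /=; rewrite fineK// CEf_fin.
split; [|split].
- move=> B mB; apply: mE; rewrite -[X in measurable X]setTI.
  apply: (measurableT_comp (fine_measurable measurableT) (CEf_meas X intX)) => //.
- by rewrite eqf; exact: CEf_Omega_int.
- move=> A FA.
  have mA : measurable (A : set Tg) by exact: mE'.
  have mA' : measurable A by exact: FM.
  have H := @integral_pushforward _ _ Omega Tg R idF measurable_idF P A (CEf X intX) (CEf_meas X intX)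
    (integrableS measurableT mA' (subsetT _) (CEf_Omega_int X intX)) mA.
  transitivity (\int[P]_(x in A) (CEf X intX \o idF) x)%E.
    by apply: eq_integral => w _; rewrite -eqf.
  transitivity (\int[muF]_(y in A) CEf X intX y)%E; first by symmetry; exact: H.
  by rewrite -CEf_integral.
Qed.
End CE.

Section Gen.
Context {d : measure_display} {Omega : measurableType d} {R : realType}.
Context (P : probability Omega R).

Lemma Tg_meas (G : set (set Omega)) (sG : sigma_algebra setT G) (A : set (Tg G)) :
  measurable A -> G A.
Proof. by rewrite measurable_g_measurableTypeE. Qed.

Lemma meas_Tg (G : set (set Omega)) (sG : sigma_algebra setT G) (A : set Omega) :
  G A -> measurable (A : set (Tg G)).
Proof. by rewrite measurable_g_measurableTypeE. Qed.

Lemma Fmeas_Tg G (sG : sigma_algebra setT G) (X : Omega -> R) :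
  Fmeas G X -> measurable_fun (setT : set (Tg G)) X.
Proof. by move=> h _ B mB; rewrite setTI; apply: meas_Tg => //; exact: h. Qed.

Lemma Tg_Fmeas G (sG : sigma_algebra setT G) (X : Omega -> R) :
  measurable_fun (setT : set (Tg G)) X -> Fmeas G X.
Proof.
move=> h B mB; apply: (@Tg_meas G sG (X @^-1` B)); rewrite -[X in measurable X]setTI.
exact: h.
Qed.

Lemma Fmeas_on_Tg G (sG : sigma_algebra setT G) (D : set Omega) (X : Omega -> R) :
  Fmeas_on G D X -> measurable_fun (D : set (Tg G)) X.
Proof. by move=> h _ B mB; apply: meas_Tg => //; exact: h. Qed.

Lemma Tg_Fmeas_on G (sG : sigma_algebra setT G) (D : set Omega) (X : Omega -> R) :
  G D -> measurable_fun (D : set (Tg G)) X -> Fmeas_on G D X.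
Proof.
move=> GD h B mB; apply: (@Tg_meas G sG (D `&` X @^-1` B)); apply: h => //; exact: meas_Tg.
Qed.

Lemma Fmeas_meas G (GM : G `<=` measurable) (X : Omega -> R) :
  Fmeas G X -> measurable_fun setT X.
Proof. by move=> h _ B mB; rewrite setTI; apply: GM; exact: h. Qed.

Lemma ae_le_int (f g : Omega -> R) (B : set Omega) : measurable B ->
  P.-integrable setT (EFin \o f) -> P.-integrable setT (EFin \o g) ->
  {ae P, forall w, f w <= g w} ->
  (\int[P]_(w in B) (f w)%:E <= \int[P]_(w in B) (g w)%:E)%E.
Proof.
move=> mB intf intg hle.
have intfB := integrableS measurableT mB (subsetT _) intf.
have intgB := integrableS measurableT mB (subsetT _) intg.
have mf : measurable_fun setT f by apply/measurable_EFinP; case/integrableP: intf.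
have mg : measurable_fun setT g by apply/measurable_EFinP; case/integrableP: intg.
have h : (0 <= \int[P]_(x in B) ((g x)%:E - (f x)%:E))%E.
  rewrite (ae_eq_integral (fun x => (Num.max (g x - f x) 0)%R%:E)) //.
  - by apply: integral_ge0 => x _; rewrite lee_fin le_max lexx orbT.
  - apply/measurable_EFinP; apply: measurable_funTS.
    by apply: measurable_funB.
  - apply/measurable_EFinP; apply: measurable_funTS.
    by apply: measurable_maxr => //; apply: measurable_funB.
  - apply: filterS hle => w hw _.
    by rewrite /= -EFinB; congr EFin; apply/esym/max_idPl; rewrite subr_ge0.
rewrite integralB_EFin // in h.
by rewrite lee_suber_addr ?add0e in h => //; apply: integrable_fin_num.
Qed.

Lemma int_le_of_ce (G : set (set Omega)) (sG : sigma_algebra setT G) (GM : G `<=` measurable)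
  (X W : Omega -> R) :
  P.-integrable setT (EFin \o X) -> P.-integrable setT (EFin \o W) ->
  (forall Z, cond_exp_version P G X Z -> {ae P, forall w, Z w <= W w}) ->
  forall B, G B -> (\int[P]_(w in B) (X w)%:E <= \int[P]_(w in B) (W w)%:E)%E.
Proof.
move=> intX intW h B GB.
have [Z hZ] := cond_exp_exists P G GM sG X intX.
have [_ [intZ eqZ]] := hZ.
rewrite -(eqZ B GB).
apply: ae_le_int => //; [exact: GM | exact: h].
Qed.


Lemma ae_le_of_int (G : set (set Omega)) (sG : sigma_algebra setT G) (GM : G `<=` measurable)
  (Z W : Omega -> R) (B0 : set Omega) :
  Fmeas G Z -> Fmeas G W ->
  P.-integrable setT (EFin \o Z) -> P.-integrable setT (EFin \o W) -> G B0 ->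
  (forall B, G B -> B `<=` B0 ->
     (\int[P]_(w in B) (Z w)%:E <= \int[P]_(w in B) (W w)%:E)%E) ->
  {ae P, forall w, B0 w -> Z w <= W w}.
Proof.
move=> hZ hW intZ intW GB0 h.
pose C := B0 `&` [set w | ((W w)%:E < (Z w)%:E)%E].
have GC : G C.
  apply: (@Tg_meas G sG C); apply: measurable_lte; first exact: meas_Tg.
  + by apply/measurable_EFinP; apply: measurable_funTS; exact: Fmeas_Tg.
  + by apply/measurable_EFinP; apply: measurable_funTS; exact: Fmeas_Tg.
have mC : measurable C := GM _ GC.
have hC := h C GC (@subIsetl _ _ _).
have mZ := Fmeas_meas G GM Z hZ.
have mW := Fmeas_meas G GM W hW.
have intZC := integrableS measurableT mC (subsetT _) intZ.
have intWC := integrableS measurableT mC (subsetT _) intW.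
have mf : measurable_fun C (fun x => (Z x - W x)%:E).
  by apply/measurable_EFinP; apply: measurable_funTS; exact: measurable_funB.
have H0 : (\int[P]_(x in C) `|(Z x - W x)%:E| = 0)%E.
  apply/eqP; rewrite eq_le integral_ge0 ?andbT; last by move=> x _; exact: abse_ge0.
  rewrite (eq_integral (fun x => ((Z x)%:E - (W x)%:E)%E)); last first.
    move=> x; rewrite inE => -[_ /=]; rewrite lte_fin => Wx.
    by rewrite -EFinB /= ger0_norm // subr_ge0 ltW.
  rewrite integralB_EFin // lee_subel_addr ?add0e //.
have := (ae_eq_integral_abs P mC mf).1 H0.
apply: filterS => w hw B0w.
rewrite leNgt; apply/negP => WZ.
have Cw : C w by split => //=; rewrite lte_fin.
have := hw Cw; rewrite /cst => -[] /eqP; rewrite subr_eq0 => /eqP ZW.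
by move: WZ; rewrite ZW ltxx.
Qed.


Lemma int_split (f : Omega -> R) (A B : set Omega) : measurable A -> measurable B ->
  measurable_fun setT f ->
  (\int[P]_(w in B) (f w)%:E =
   \int[P]_(w in B `&` A) (f w)%:E + \int[P]_(w in B `&` ~` A) (f w)%:E)%E.
Proof.
move=> mA mB mf.
rewrite -integral_setU //.
- by rewrite -setIUr setUv setIT.
- exact: measurableI.
- by apply: measurableI => //; exact: measurableC.
- by apply/measurable_EFinP; exact: measurable_funTS.
- by apply/disj_setPS => w [[_ Aw] [_ nAw]].
Qed.


Lemma FI (G : set (set Omega)) (sG : sigma_algebra setT G) A B : G A -> G B -> G (A `&` B).
Proof.
move=> GA GB; apply: (@Tg_meas G sG); apply: measurableI; exact: meas_Tg.
Qed.

Lemma FC (G : set (set Omega)) (sG : sigma_algebra setT G) A : G A -> G (~` A).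
Proof. move=> GA; apply: (@Tg_meas G sG); apply: measurableC; exact: meas_Tg. Qed.

Lemma FT (G : set (set Omega)) (sG : sigma_algebra setT G) : G setT.
Proof. apply: (@Tg_meas G sG); exact: measurableT. Qed.

End Gen.

Lemma inT_le T s u : (s <= u)%N -> inT T u -> inT T s.
Proof. by case: T => //= n su un; apply: leq_trans un. Qed.

Lemma inT_succ T t : ltT t T -> inT T t.+1.
Proof. by case: T. Qed.

Lemma ltT_inT T t : ltT t T -> inT T t.
Proof. by case: T => //= n /ltnW. Qed.

Arguments FI {d Omega G} sG {A B}.
Arguments FC {d Omega G} sG {A}.
Arguments FT {d Omega G} sG.
Arguments int_le_of_ce {d Omega R} P {G} sG GM {X W}.
Arguments ae_le_of_int {d Omega R} P {G} sG GM {Z W B0}.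
Arguments int_split {d Omega R} P {f A B}.
Arguments inT_le {T s u}.
Arguments inT_succ {T t}.
Arguments ltT_inT {T t}.

Section Modify.
Context {d : measure_display} {Omega : measurableType d} {R : realType}.
Context (P : probability Omega R).

Lemma supermart_modify T F (X : nat -> Omega -> R) (Xt' : Omega -> R) t (A : set Omega) :
  filtration T F -> ltT t T -> supermart P T F X -> F t A ->
  Fmeas (F t) Xt' -> P.-integrable setT (EFin \o Xt') ->
  (forall w, Xt' w <= X t w) ->
  (forall w, ~ A w -> Xt' w = X t w) ->
  (forall B, F t B -> B `<=` A ->
     (\int[P]_(w in B) (X t.+1 w)%:E <= \int[P]_(w in B) (Xt' w)%:E)%E) ->
  supermart P T F (fun u => if u == t then Xt' else X u).
Proof.
move=> hF htT [hXm hXs] GA mXt' iXt' hle hout hA.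
have sFs u : inT T u -> sigma_algebra setT (F u) by move=> h; exact: (hF.1 u h).1.
have FMs u : inT T u -> F u `<=` measurable by move=> h; exact: (hF.1 u h).2.
have mono := hF.2.1.
have hTt := ltT_inT htT.
have hTt1 := inT_succ htT.
have intX v : inT T v -> P.-integrable setT (EFin \o X v) by move=> h; exact: (hXm v h).2.
have mX v : inT T v -> measurable_fun setT (X v).
  by move=> h; apply: (Fmeas_meas _ (FMs v h)); exact: (hXm v h).1.
have ceX v v' : (v <= v')%N -> inT T v' -> forall B, F v B ->
    (\int[P]_(w in B) (X v' w)%:E <= \int[P]_(w in B) (X v w)%:E)%E.
  move=> vv' hv' B FB; have hv := inT_le vv' hv'.
  apply: (int_le_of_ce P (sFs v hv) (FMs v hv) (intX v' hv') (intX v hv)) => //.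
  exact: hXs.
have hX'm u : inT T u -> Fmeas (F u) (if u == t then Xt' else X u) /\ P.-integrable setT (EFin \o (if u == t then Xt' else X u)).
  by move=> hu; case: ifP => [/eqP -> //|_]; exact: hXm.
have K s u : (s <= u)%N -> inT T u -> forall B, F s B ->
   (\int[P]_(w in B) ((if u == t then Xt' else X u) w)%:E <=
    \int[P]_(w in B) ((if s == t then Xt' else X s) w)%:E)%E.
  move=> su hu B FB; have hs := inT_le su hu.
  case: (eqVneq u t) => [ut|ut]; case: (eqVneq s t) => [st|st].
  - by rewrite lexx.
  - move: su hu hs; rewrite ut => su hu hs.
    have mB := FMs s hs B FB.
    apply: (@le_trans _ _ (\int[P]_(w in B) (X t w)%:E)%E); last exact: ceX.
    apply: le_integral => //.
    + exact: integrableS measurableT mB (subsetT _) iXt'.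
    + exact: integrableS measurableT mB (subsetT _) (intX t hTt).
    + by move=> w _; rewrite lee_fin.
  - move: su hu hs FB; rewrite st => su hu hs FB.
    have tu : (t.+1 <= u)%N by rewrite ltn_neqAle eq_sym ut su.
    have mB := FMs t hTt B FB.
    have mA := FMs t hTt A GA.
    rewrite (int_split P mA mB (mX u hu)).
    rewrite (int_split P mA mB (Fmeas_meas _ (FMs t hTt) _ mXt')).
    apply: leeD.
    + apply: (@le_trans _ _ (\int[P]_(w in B `&` A) (X t.+1 w)%:E)%E).
        apply: (ceX t.+1 u tu hu); apply: (mono t t.+1 (leqnSn t) hTt1).
        by move: (FI (sFs t hTt) FB GA).
      apply: (hA _ (FI (sFs t hTt) FB GA)); exact: subIsetr.
    + apply: (@le_trans _ _ (\int[P]_(w in B `&` ~` A) (X t w)%:E)%E).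
        apply: (ceX t u (ltnW tu) hu).
        by move: (FI (sFs t hTt) FB (FC (sFs t hTt) GA)).
      rewrite le_eqVlt; apply/orP; left; apply/eqP.
      by apply: eq_integral => w; rewrite inE => -[_ nAw]; rewrite hout.
  - exact: ceX.
split; first exact: hX'm.
move=> s u su hu Z hZ.
have hs := inT_le su hu.
have [hZm [hZi hZe]] := hZ.
have := ae_le_of_int P (sFs s hs) (FMs s hs) hZm (hX'm s hs).1 hZi (hX'm s hs).2
  (FT (sFs s hs)) (fun B FB _ => ltac:(rewrite hZe //; exact: K)).
by apply: filterS => w; apply.
Qed.


Lemma supermart_ext_modify T F (X : nat -> Omega -> R) Xinf (Xt' : Omega -> R) t (A : set Omega) :
  filtration T F -> ltT t T -> supermart_ext P T F X Xinf -> F t A ->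
  Fmeas (F t) Xt' -> P.-integrable setT (EFin \o Xt') ->
  (forall w, Xt' w <= X t w) ->
  (forall w, ~ A w -> Xt' w = X t w) ->
  (forall B, F t B -> B `<=` A ->
     (\int[P]_(w in B) (X t.+1 w)%:E <= \int[P]_(w in B) (Xt' w)%:E)%E) ->
  supermart_ext P T F (fun u => if u == t then Xt' else X u) Xinf.
Proof.
move=> hF htT [hXs hinf] GA mXt' iXt' hle hout hA.
have hX' := supermart_modify _ _ _ _ _ _ hF htT hXs GA mXt' iXt' hle hout hA.
split => // TN.
have [hm [hi hs]] := hinf TN.
split => //; split => // s Z hZ.
have hTs : inT T s by rewrite TN.
have sFs u : inT T u -> sigma_algebra setT (F u) by move=> h; exact: (hF.1 u h).1.
have FMs u : inT T u -> F u `<=` measurable by move=> h; exact: (hF.1 u h).2.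
have mono := hF.2.1.
have [hXm _] := hXs.
have intX v : inT T v -> P.-integrable setT (EFin \o X v) by move=> h; exact: (hXm v h).2.
have hTt := ltT_inT htT.
have hTt1 := inT_succ htT.
have [hZm [hZi hZe]] := hZ.
have [hX'm _] := hX'.
have := ae_le_of_int P (sFs s hTs) (FMs s hTs) hZm (hX'm s hTs).1 hZi (hX'm s hTs).2
  (FT (sFs s hTs)); apply: ssrfun.id.
move=> /(_ _) H; have : {ae P, forall w, [set: Omega] w -> Z w <= (if s == t then Xt' else X s) w}.
  apply: H => B FB _; rewrite hZe //.
  case: (eqVneq s t) => [st|st]; last first.
    exact: (int_le_of_ce P (sFs s hTs) (FMs s hTs) hi (intX s hTs) (hs s)).
  move: FB; rewrite st => FB.
  have mB := FMs t hTt B FB.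
  have mA := FMs t hTt A GA.
  have mXinf : measurable_fun setT Xinf by apply/measurable_EFinP; case/integrableP: hi.
  rewrite (int_split P mA mB mXinf).
  rewrite (int_split P mA mB (Fmeas_meas _ (FMs t hTt) _ mXt')).
  apply: leeD.
  + apply: (@le_trans _ _ (\int[P]_(w in B `&` A) (X t.+1 w)%:E)%E).
      apply: (int_le_of_ce P (sFs t.+1 hTt1) (FMs t.+1 hTt1) hi (intX t.+1 hTt1) (hs t.+1)).
      apply: (mono t t.+1 (leqnSn t) hTt1).
      by move: (FI (sFs t hTt) FB GA).
    apply: (hA _ (FI (sFs t hTt) FB GA)); exact: subIsetr.
  + apply: (@le_trans _ _ (\int[P]_(w in B `&` ~` A) (X t w)%:E)%E).
      apply: (int_le_of_ce P (sFs t hTt) (FMs t hTt) hi (intX t hTt) (hs t)).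
      by move: (FI (sFs t hTt) FB (FC (sFs t hTt) GA)).
    rewrite le_eqVlt; apply/orP; left; apply/eqP.
    by apply: eq_integral => w; rewrite inE => -[_ nAw]; rewrite hout.
by apply: filterS => w; apply.
Qed.

End Modify.

Lemma ltT_le s t T : (s <= t)%N -> ltT t T -> ltT s T.
Proof. by case: T => //= n st tn; apply: leq_ltn_trans tn. Qed.

Section TeSec.
Context {d : measure_display} {Omega : measurableType d} {R : realType}.

Lemma Te_char (T : enat) (p : nat -> Omega -> R) (w : Omega) t :
  ltT t (eff_horizon T p w) <-> ltT t T /\ (forall s, (s <= t)%N -> p s w <> 0%R).
Proof.
rewrite /eff_horizon; case: pselect => [h|h].
  case: ex_minnP => m /asboolP [hmT hm0] hmin /=.
  split.
  - move=> tm; split; first exact: ltT_le (ltnW tm) hmT.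
    move=> s st ps0.
    have : (m <= s)%N.
      apply: hmin; apply/asboolP; split => //.
      exact: ltT_le (leq_trans st (ltnW tm)) hmT.
    by rewrite leqNgt (leq_ltn_trans st tm).
  - move=> [htT hs]; rewrite ltnNge; apply/negP => mt.
    exact: (hs m mt hm0).
split; last by case.
move=> htT; split => // s st ps0; apply: h; exists s; apply/asboolP; split => //.
exact: ltT_le st htT.
Qed.

Lemma Te_lt (T : enat) (p : nat -> Omega -> R) (w : Omega) t :
  ltT t (eff_horizon T p w) -> ltT t T.
Proof. by move/Te_char => []. Qed.

End TeSec.

Lemma tmin_self t e : ltT t e -> tmin t e = t.
Proof. by case: e => //= m tm; apply/minn_idPl; exact: ltnW. Qed.

Lemma tmin_succ t e : ltT t e -> tmin t.+1 e = t.+1.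
Proof. by case: e => //= m tm; apply/minn_idPl. Qed.

Lemma tmin_eq u t e : ltT t e -> tmin u e = t -> u = t.
Proof.
case: e => //= m tm; rewrite /minn; case: ifP => // _ mt.
by move: tm; rewrite mt ltnn.
Qed.

Section ESec.
Context {d : measure_display} {Omega : measurableType d} {R : realType}.

Lemma E_meas (T : enat) (F : nat -> set (set Omega)) (p : nat -> Omega -> R) t :
  filtration T F -> (forall s, ltT s T -> Fmeas (F s) (p s)) -> ltT t T ->
  F t [set w | ltT t (eff_horizon T p w)].
Proof.
move=> hF hp htT.
have hTt := ltT_inT htT.
have sFt := (hF.1 t hTt).1.
have Fp s : (s <= t)%N -> F t [set w | p s w <> 0%R].
  move=> st.
  have h0 : F s (p s @^-1` [set 0%R]) := hp s (ltT_le _ _ _ st htT) [set 0%R] (measurable_set1 0%R).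
  have h1 := hF.2.1 s t st hTt _ h0.
  by move: (FC sFt h1).
suff H : forall k, (k <= t)%N -> F t [set w | forall s, (s <= k)%N -> p s w <> 0%R].
  have -> : [set w | ltT t (eff_horizon T p w)] =
            [set w | forall s, (s <= t)%N -> p s w <> 0%R].
    by apply/seteqP; split => w /=; rewrite Te_char; [case | split].
  exact: H.
elim => [_|k IH kt].
  have -> : [set w | forall s, (s <= 0)%N -> p s w <> 0%R] = [set w | p 0%N w <> 0%R].
    apply/seteqP; split => w /= h; first exact: h.
    by move=> s; rewrite leqn0 => /eqP ->.
  exact: Fp.
have -> : [set w | forall s, (s <= k.+1)%N -> p s w <> 0%R] =
    [set w | forall s, (s <= k)%N -> p s w <> 0%R] `&` [set w | p k.+1 w <> 0%R].
  apply/seteqP; split => w /=.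
  - move=> h; split; [move=> s sk; apply: h; exact: leqW | exact: h].
  - move=> [h1 h2] s; rewrite leq_eqVlt => /orP [/eqP -> // | ]; rewrite ltnS; exact: h1.
by move: (FI sFt (IH (ltnW kt)) (Fp _ kt)).
Qed.

End ESec.

Section MeasIf.
Context {R : realType}.

Lemma meas_if {dd} {TT : measurableType dd} (D A : set TT) (g h : TT -> R) :
  measurable D -> measurable A ->
  measurable_fun (D `&` A) g -> measurable_fun (D `&` ~` A) h ->
  measurable_fun D (fun w => if `[< A w >] then g w else h w).
Proof.
move=> mD mA mg mh.
have Et : (fun w => `[< A w >]) @^-1` [set true] = A.
  by apply/seteqP; split => w /=; [move/asboolP | move=> ?; apply/asboolP].
have Ef : (fun w => `[< A w >]) @^-1` [set false] = ~` A.
  apply/seteqP; split => w /=; first by move=> h0 Aw; move: h0; rewrite asboolT.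
  by move=> nA; rewrite asboolF.
apply: measurable_fun_if => //.
- by apply: (measurable_fun_bool true); rewrite Et; exact: measurableI.
- by rewrite Et.
- by rewrite Ef.
Qed.

End MeasIf.

Arguments Tg_meas {d Omega G} sG {A}.
Arguments meas_Tg {d Omega G} sG {A}.
Arguments Fmeas_Tg {d Omega R G} sG {X}.
Arguments Fmeas_on_Tg {d Omega R G} sG {D X}.
Arguments Tg_Fmeas {d Omega R G} sG {X}.
Arguments Tg_Fmeas_on {d Omega R G} sG {D X}.
Arguments Fmeas_meas {d Omega R G} GM {X}.
Arguments ae_le_int {d Omega R} P {f g B}.
Arguments supermart_ext_modify {d Omega R} P {T F X Xinf Xt' t A}.
Arguments supermart_modify {d Omega R} P {T F X Xt' t A}.
Arguments meas_if {R dd TT D A g h}.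
Arguments Te_lt {d Omega R T p w t}.
Arguments E_meas {d Omega R T F p t}.
Arguments tmin_eq {u t e}.
Arguments tmin_self {t e}.
Arguments tmin_succ {t e}.
Arguments ltT_le {s t T}.
Section RealIneq.
Context {R : realDomainType}.

Lemma norm_between (a b c : R) : c <= a -> a <= b -> `|a| <= `|c| + `|b|.
Proof.
move=> ca ab.
have h1 : c <= `|c| := ler_norm c.
have h2 : - c <= `|c| by rewrite -normrN ler_norm.
have h3 : b <= `|b| := ler_norm b.
have h4 : - b <= `|b| by rewrite -normrN ler_norm.
rewrite ler_norml; apply/andP; split; lra.
Qed.

Lemma key_lo (s v y g0 : R) : 0 <= s -> s <= 1 -> y < s * v ->
  y <= s * Num.max g0 (v - s * v + y).
Proof.
move=> s0 s1 ysv.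
have hm : v - s * v + y <= Num.max g0 (v - s * v + y) by rewrite le_max lexx orbT.
have := ler_wpM2l s0 hm => h.
apply: le_trans h.
have : 0 <= (1 - s) * (s * v - y) by apply: mulr_ge0; lra.
nra.
Qed.

Lemma key_hi (s v y g0 : R) : 0 <= s -> g0 < v -> y < s * v ->
  s * Num.max g0 (v - s * v + y) <= s * v.
Proof.
move=> s0 gv ysv; apply: ler_wpM2l => //.
rewrite ge_max; apply/andP; split; lra.
Qed.

Lemma key_lt (s v y g0 : R) : g0 < v -> y < s * v -> Num.max g0 (v - s * v + y) < v.
Proof. by move=> gv ysv; rewrite gt_max gv /=; lra. Qed.

End RealIneq.

Theorem lemma6p2 (d : measure_display) (Omega : measurableType d) (R : realType)
  (P : probability Omega R) (T : enat) (F : nat -> set (set Omega))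
  (sigma : Omega -> enat) (G : nat -> Omega -> R)
  (p : nat -> Omega -> R)
  (V : nat -> Omega -> R) (S : nat -> Omega -> R) (Sinf : Omega -> R) :
  (* standing assumptions *)
  filtration T F ->
  stopping_time T F sigma ->
  P [set w | ltT 0 (sigma w)] = 1%E ->
  (forall t, inT T t -> Fmeas_on (F t) (Dset sigma t) (G t)) ->
  (\int[P]_w ereal_sup [set (`|G t w| * \1_(Dset sigma t) w)%:E
                       | t in [set t | inT T t]] < +oo)%E ->
  (* p t is a version of P(D_{t+1} | F_t); T_e is the effective horizon *)
  (forall t, ltT t T ->
     cond_exp_version P (F t) (\1_(Dset sigma t.+1)) (p t)) ->
  let Te := eff_horizon T p in
  let D := Dset sigma in
  (* (i) *)
  (forall t, inT T t ->
     {ae P, forall w, (D t w -> 0 < S t w <= 1) /\ (~ D t w -> S t w = 0)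
                      /\ (D t w -> ~ ltT t (Te w) -> V t w = G t w)}) ->
  (* (ii) *)
  ((forall t, inT T t -> Fmeas_on (F t) (D t) (V t)) /\
   (forall t, inT T t -> {ae P, forall w, D t w -> G t w <= V t w}) /\
   supermart P T F (stopped (fun t w => S t w * V t w) Te)) ->
  (forall W : nat -> Omega -> R,
     (forall t, inT T t -> Fmeas_on (F t) (D t) (W t)) ->
     (forall t, inT T t -> {ae P, forall w, D t w -> G t w <= W t w}) ->
     supermart P T F (stopped (fun t w => S t w * W t w) Te) ->
     forall t, inT T t -> {ae P, forall w, D t w -> V t w <= W t w}) ->
  (* (iii) *)
  ((forall t, inT T t -> {ae P, forall w, 0 <= S t w}) /\
   (T = None -> {ae P, forall w, 0 <= Sinf w}) /\
   supermart_ext P T F S Sinf /\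
   (forall t, inT T t -> {ae P, forall w, D t w -> V t w = G t w -> S t w = 1}) /\
   (T = None -> {ae P, forall w, Sinf w = \1_[set w | sigma w = None] w})) ->
  (forall (Y : nat -> Omega -> R) (Yinf : Omega -> R),
     (forall t, inT T t -> {ae P, forall w, 0 <= Y t w}) ->
     (T = None -> {ae P, forall w, 0 <= Yinf w}) ->
     supermart_ext P T F Y Yinf ->
     (forall t, inT T t -> {ae P, forall w, D t w -> V t w = G t w -> Y t w = 1}) ->
     (T = None -> {ae P, forall w, Yinf w = \1_[set w | sigma w = None] w}) ->
     (forall t, inT T t -> {ae P, forall w, S t w <= Y t w}) /\
     (T = None -> {ae P, forall w, Sinf w <= Yinf w})) ->
  (* conclusion *)
  forall t, inT T t ->
    (forall Y, cond_exp_version P (F t) (S t.+1) Y ->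
       {ae P, forall w, ltT t (Te w) -> D t w -> G t w < V t w -> S t w = Y w}) /\
    (forall Y, cond_exp_version P (F t) (fun w => S t.+1 w * V t.+1 w) Y ->
       {ae P, forall w, ltT t (Te w) -> D t w -> G t w < V t w ->
                        S t w * V t w = Y w}).
Proof.
move=> hF hst hP0 hG hint hp Te D hi [hVm [hVG hVsm]] hVmin
  [hS0 [hSinf0 [hSsm [hS1 hSinf1]]]] hSmin t hTt.
have [htT|htT] := pselect (ltT t T); last first.
  by split => Y _; apply: aeW => w /Te_lt.
have sFs u : inT T u -> sigma_algebra setT (F u) by move=> h; exact: (hF.1 u h).1.
have FMs u : inT T u -> F u `<=` measurable by move=> h; exact: (hF.1 u h).2.
have mono := hF.2.1.
have hTt1 := inT_succ htT.
have hpm s : ltT s T -> Fmeas (F s) (p s) by move=> h; exact: (hp s h).1.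
have GE : F t [set w | ltT t (Te w)] := E_meas hF hpm htT.
have GD u : inT T u -> F u (D u).
  by move=> hu; have := hVm u hu setT measurableT; rewrite preimage_setT setIT.
have [hSm hSs] := hSsm.1.
have sFt := sFs t hTt.
have mDt : measurable (D t : set (Tg (F t))) := meas_Tg sFt (GD t hTt).
have mGt : measurable_fun (D t : set (Tg (F t))) (G t) := Fmeas_on_Tg sFt (hG t hTt).
have mVt : measurable_fun (D t : set (Tg (F t))) (V t) := Fmeas_on_Tg sFt (hVm t hTt).
have mSt : measurable_fun (setT : set (Tg (F t))) (S t) := Fmeas_Tg sFt (hSm t hTt).1.
have iSt := (hSm t hTt).2.
split.
- move=> Y hY.
  have [hYm [hYi hYe]] := hY.
  have mY : measurable_fun (setT : set (Tg (F t))) Y := Fmeas_Tg sFt hYm.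
  have hYle : {ae P, forall w, Y w <= S t w} := hSs t t.+1 (leqnSn t) hTt1 Y hY.
  pose A := [set w | D t w /\ G t w < V t w /\ Y w < S t w /\ 0 < S t w].
  have GA : F t A.
    apply: (Tg_meas sFt).
    have -> : A = (D t `&` [set w | ((G t w)%:E < (V t w)%:E)%E]) `&`
                  (setT `&` [set w | ((Y w)%:E < (S t w)%:E)%E]) `&`
                  (setT `&` [set w | ((cst 0%R w)%:E < (S t w)%:E)%E]).
      apply/seteqP; split => w /=; rewrite !lte_fin.
      + by move=> [Dw [GV [YS S0]]].
      + by move=> [[[Dw GV] [_ YS]] [_ S0]].
    apply: measurableI; first apply: measurableI.
    + apply: measurable_lte => //; apply/measurable_EFinP => //.
    + apply: measurable_lte => //; apply/measurable_EFinP => //.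
    + apply: measurable_lte => //; apply/measurable_EFinP => //.
  pose St' := fun w => if `[< A w >] then Num.max (Y w) 0 else S t w.
  have mA : measurable (A : set (Tg (F t))) := meas_Tg sFt GA.
  have mSt' : Fmeas (F t) St'.
    apply: (Tg_Fmeas sFt); apply: meas_if => //.
    + apply: measurable_funS (measurable_maxr mY (measurable_cst _)) => //.
    + exact: measurable_funS mSt.
  have iSt' : P.-integrable setT (EFin \o St').
    apply: (@le_integrable _ _ _ P setT measurableT (EFin \o St') (fun w => (`|(Y w)%:E| + `|(S t w)%:E|)%E)) => //.
    + by apply/measurable_EFinP; exact: (Fmeas_meas (FMs t hTt) mSt').
    + move=> w _; rewrite /St' /=.
      rewrite lee_fin [X in _ <= X]ger0_norm ?addr_ge0 //; case: asboolP => _.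
      * rewrite ger0_norm; last by rewrite le_max lexx orbT.
        apply: (@le_trans _ _ `|Y w|); first by rewrite ge_max ler_norm normr_ge0.
        by rewrite lerDl.
      * by rewrite lerDr.
    + apply: integrableD => //; exact: integrable_abse.
  have hle w : St' w <= S t w.
    rewrite /St'; case: asboolP => // -[_ [_ [YS S0]]].
    by rewrite ge_max !ltW.
  have hout w : ~ A w -> St' w = S t w by move=> nA; rewrite /St' asboolF.
  have hA B : F t B -> B `<=` A ->
     (\int[P]_(w in B) (S t.+1 w)%:E <= \int[P]_(w in B) (St' w)%:E)%E.
    move=> FB BA; rewrite -hYe //.
    have mB := FMs t hTt B FB.
    apply: le_integral => //.
    + exact: integrableS measurableT mB (subsetT _) hYi.
    + exact: integrableS measurableT mB (subsetT _) iSt'.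
    + move=> w; rewrite inE => /BA Aw; rewrite lee_fin /St' asboolT //.
      by rewrite le_max lexx.
  have hext := supermart_ext_modify P hF htT hSsm GA mSt' iSt' hle hout hA.
  have H0 : forall u, inT T u -> {ae P, forall w, 0 <= (if u == t then St' else S u) w}.
    move=> u hu; case: (eqVneq u t) => [ut|ut]; last exact: hS0.
    subst u.
    apply: filterS (hS0 t hTt) => w h; rewrite /St'; case: asboolP => // _.
    by rewrite le_max lexx orbT.
  have H1 : forall u, inT T u -> {ae P, forall w, D u w -> V u w = G u w ->
       (if u == t then St' else S u) w = 1}.
    move=> u hu; case: (eqVneq u t) => [ut|ut]; last exact: hS1.
    subst u.
    apply: filterS (hS1 t hTt) => w h Dw VG; rewrite /St' asboolF; first exact: h.
    by move=> [_ [GV _]]; move: GV; rewrite VG ltxx.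
  have [hmin _] := hSmin _ Sinf H0 hSinf0 hext H1 hSinf1.
  have := hmin t hTt; rewrite eqxx => hmint.
  apply: filterS3 hmint hYle (hi t hTt) => w h1 h2 [h3 _] _ Dw GV.
  apply/eqP; rewrite eq_le h2 andbT leNgt; apply/negP => YS.
  have S0 : 0 < S t w by case/andP: (h3 Dw).
  have Aw : A w by [].
  by move: h1; rewrite /St' asboolT // leNgt gt_max YS S0.

- move=> Y2 hY2.
  have [hY2m [hY2i hY2e]] := hY2.
  have mY2 : measurable_fun (setT : set (Tg (F t))) Y2 := Fmeas_Tg sFt hY2m.
  have [hXm hXs] := hVsm.
  pose X := stopped (fun t w => S t w * V t w) Te.
  have intX u : inT T u -> P.-integrable setT (EFin \o X u) by move=> h; exact: (hXm u h).2.
  have mFt := FMs t hTt.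
  pose E := [set w | ltT t (Te w)].
  have XtE w : E w -> X t w = S t w * V t w by move=> Ew; rewrite /X /stopped tmin_self.
  have Xt1E w : E w -> X t.+1 w = S t.+1 w * V t.+1 w by move=> Ew; rewrite /X /stopped tmin_succ.
  have hY2le : {ae P, forall w, E w -> Y2 w <= S t w * V t w}.
    have := ae_le_of_int P sFt mFt hY2m (hXm t hTt).1 hY2i (intX t hTt) GE.
    move=> /(_ _) H.
    have : {ae P, forall w, E w -> Y2 w <= X t w}.
      apply: H => B FB BE.
      have mB := mFt B FB.
      rewrite hY2e //.
      rewrite (_ : \int[P]_(w in B) _ = \int[P]_(w in B) (X t.+1 w)%:E)%E; last first.
        by apply: eq_integral => w; rewrite inE => /BE Ew; rewrite Xt1E.
      exact: (int_le_of_ce P sFt mFt (intX t.+1 hTt1) (intX t hTt) (hXs t t.+1 (leqnSn t) hTt1)).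
    by apply: filterS => w h Ew; rewrite -XtE //; exact: h.
  pose A2 := [set w | E w /\ D t w /\ G t w < V t w /\ Y2 w < S t w * V t w /\
                      0 <= S t w /\ S t w <= 1].
  have mSVt : measurable_fun (D t : set (Tg (F t))) (fun w => S t w * V t w).
    by apply: measurable_funM => //; exact: measurable_funS mSt.
  have GA2 : F t A2.
    apply: (Tg_meas sFt).
    have -> : A2 = [set w | E w] `&` (D t `&` [set w | ((G t w)%:E < (V t w)%:E)%E]) `&`
                  (D t `&` [set w | ((Y2 w)%:E < (S t w * V t w)%:E)%E]) `&`
                  ~` (setT `&` [set w | ((S t w)%:E < (cst 0%R w)%:E)%E]) `&`
                  ~` (setT `&` [set w | ((cst 1%R w)%:E < (S t w)%:E)%E]).
      apply/seteqP; split => w /=; rewrite !lte_fin.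
      + move=> [Ew [Dw [GV [YS [S0 S1]]]]]; split; [split; [split; [split|]|]|] => //.
        * by move=> [_]; rewrite ltNge S0.
        * by move=> [_]; rewrite ltNge S1.
      + move=> [[[[Ew [Dw GV]] [_ YS]] nS0] nS1].
        split=> //; split=> //; split=> //; split=> //; split.
          by rewrite leNgt; apply/negP => h; apply: nS0.
        by rewrite leNgt; apply/negP => h; apply: nS1.
    apply: measurableI; [apply: measurableI; [apply: measurableI; [apply: measurableI|]|]|].
    + by move: (meas_Tg sFt GE).
    + apply: measurable_lte => //; apply/measurable_EFinP => //.
    + apply: measurable_lte => //; apply/measurable_EFinP => //.
      exact: measurable_funS mY2.
    + apply: measurableC; apply: measurable_lte => //; apply/measurable_EFinP => //.
    + apply: measurableC; apply: measurable_lte => //; apply/measurable_EFinP => //.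
  have mA2 : measurable (A2 : set (Tg (F t))) := meas_Tg sFt GA2.
  have A2D : A2 `<=` D t by move=> w [_ [Dw _]].
  pose g := fun w => Num.max (G t w) (V t w - S t w * V t w + Y2 w).
  have mg : measurable_fun (D t : set (Tg (F t))) g.
    apply: measurable_maxr => //; apply: measurable_funD => //; last first.
      exact: measurable_funS mY2.
    exact: measurable_funB.
  pose Wt := fun w => if `[< A2 w >] then g w else V t w.
  pose W := fun u => if u == t then Wt else V u.
  pose Xt' := fun w => if `[< A2 w >] then S t w * g w else X t w.
  have mXt' : Fmeas (F t) Xt'.
    apply: (Tg_Fmeas sFt); apply: meas_if => //.
    + apply: measurable_funM.
      * exact: measurable_funS mSt.
      * by apply: measurable_funS mg => //; move=> w [_ /A2D].
    + apply: measurable_funS (Fmeas_Tg sFt (hXm t hTt).1) => //.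
  have A2lo w : A2 w -> Y2 w <= S t w * g w.
    by move=> [_ [_ [_ [YS [S0 S1]]]]]; exact: key_lo.
  have A2hi w : A2 w -> S t w * g w <= X t w.
    by move=> [Ew [_ [GV [YS [S0 S1]]]]]; rewrite XtE //; exact: key_hi.
  have iXt' : P.-integrable setT (EFin \o Xt').
    apply: (@le_integrable _ _ _ P setT measurableT (EFin \o Xt')
      (fun w => (`|(Y2 w)%:E| + `|(X t w)%:E|)%E)) => //.
    + by apply/measurable_EFinP; exact: (Fmeas_meas (FMs t hTt) mXt').
    + move=> w _; rewrite /Xt' /=.
      rewrite lee_fin [X in _ <= X]ger0_norm ?addr_ge0 //; case: asboolP => hw.
      * exact: norm_between (A2lo w hw) (A2hi w hw).
      * by rewrite lerDr.
    + apply: integrableD => //; apply: integrable_abse => //.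
      exact: intX t hTt.
  have hleX w : Xt' w <= X t w.
    by rewrite /Xt'; case: asboolP => // hw; exact: A2hi.
  have houtX w : ~ A2 w -> Xt' w = X t w by move=> nA; rewrite /Xt' asboolF.
  have hAX B : F t B -> B `<=` A2 ->
     (\int[P]_(w in B) (X t.+1 w)%:E <= \int[P]_(w in B) (Xt' w)%:E)%E.
    move=> FB BA.
    have mB := mFt B FB.
    rewrite (_ : \int[P]_(w in B) _ = \int[P]_(w in B) (S t.+1 w * V t.+1 w)%:E)%E; last first.
      by apply: eq_integral => w; rewrite inE => /BA [Ew _]; rewrite Xt1E.
    rewrite -hY2e //.
    apply: le_integral => //.
    + exact: integrableS measurableT mB (subsetT _) hY2i.
    + exact: integrableS measurableT mB (subsetT _) iXt'.
    + move=> w; rewrite inE => /BA Aw; rewrite lee_fin /Xt' asboolT //.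
      exact: A2lo.
  have hsm := supermart_modify P hF htT hVsm GA2 mXt' iXt' hleX houtX hAX.
  have stE : stopped (fun u w => S u w * W u w) Te =
             (fun u => if u == t then Xt' else X u).
    apply/funext => u; apply/funext => w; rewrite /stopped /W /X /stopped.
    case: (eqVneq u t) => [ut|ut].
      subst u; rewrite /Xt'; case: asboolP => hw.
        have Ew : E w by case: hw.
        by rewrite (tmin_self Ew) eqxx /Wt asboolT.
      rewrite /X /stopped.
      case: (eqVneq (tmin t (Te w)) t) => [mt|mt] //.
      by rewrite mt /Wt asboolF.
    rewrite /X /stopped.
    case: (eqVneq (tmin u (Te w)) t) => [mt|mt] //.
    rewrite mt /Wt asboolF // => hw.
    have Ew : E w by case: hw.
    by move: ut; rewrite (tmin_eq Ew mt) eqxx.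
  have c1 u : inT T u -> Fmeas_on (F u) (D u) (W u).
    rewrite /W; case: (eqVneq u t) => [->|_] hu; last exact: hVm.
    apply: (Tg_Fmeas_on sFt (GD t hTt)); apply: meas_if => //.
    + by apply: measurable_funS mg => //; apply: subIsetl.
    + by apply: measurable_funS mVt => //; apply: subIsetl.
  have c2 u : inT T u -> {ae P, forall w, D u w -> G u w <= W u w}.
    rewrite /W; case: (eqVneq u t) => [->|_] hu; last exact: hVG.
    apply: filterS (hVG t hTt) => w h Dw; rewrite /Wt; case: asboolP => _.
    + by rewrite le_max lexx.
    + exact: h.
  have c3 : supermart P T F (stopped (fun u w => S u w * W u w) Te) by rewrite stE.
  have := hVmin W c1 c2 c3 t hTt; rewrite /W eqxx => hmin.
  apply: filterS3 hmin hY2le (hi t hTt) => w h1 h2 [h3 _] Ew Dw GV.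
  apply/eqP; rewrite eq_le (h2 Ew) andbT leNgt; apply/negP => YS.
  have /andP [S0 S1] := h3 Dw.
  have Aw : A2 w by do 5!split => //; exact: ltW.
  have := h1 Dw; rewrite /Wt asboolT //.
  by rewrite leNgt key_lt.
Qed.
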